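(* Let $F:\mathcal{P}(V,A)\to S_2(A)$ be a weakly viable consular election rule satisfying SPP and SPO. Then $F$ is unanimous: for every profile $P$ and $a\in A$, if $a$ is ranked first by every voter in $P$, then $a\in F(P)$.
   Context: $V$ is a finite nonempty set of voters, $A$ a finite set of alternatives; a profile $P$ assigns to each voter $i$ a linear order $P_i$ on $A$; $P_i'P_{-i}$ replaces voter $i$'s order by $P_i'$. $S_2(A)$ is the set of 2-element subsets of $A$; a consular election rule is a map $F:\mathcal{P}(V,A)\to S_2(A)$. SPO: for all $P$, $i$, $P_i'$, $\mathrm{best}(P_i,F(P))\succeq_i\mathrm{best}(P_i,F(P_i'P_{-i}))$; SPP: same with $\mathrm{worst}$, where $\mathrm{best}(P_i,W)$, $\mathrm{worst}(P_i,W)$ are the $P_i$-best and $P_i$-worst elements of $W$. Weakly viable: every $a\in A$ lies in $F(P)$ for some profile $P$. *)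

(* Defs.v *)
From mathcomp Require Import all_boot.
Set Implicit Arguments. Unset Strict Implicit. Unset Printing Implicit Defensive.

(* A (weak-reflexive) linear order on A: [r x y] means "x is ranked at least
   as high as y" (x ≽ y). *)
Definition is_linorder (A : finType) (r : rel A) : Prop :=
  [/\ reflexive r, antisymmetric r, transitive r & total r].

Definition linorder (A : finType) := {r : rel A | is_linorder r}.

Definition lo_rel (A : finType) (o : linorder A) : rel A := proj1_sig o.

Definition profile (V A : finType) := V -> linorder A.

Definition update (V A : finType) (P : profile V A) (i : V) (o : linorder A)
  : profile V A := fun j => if j == i then o else P j.

Definition is_pair (A : finType) (W : {set A}) : bool := #|W| == 2.

Definition consular_rule (V A : finType) :=
  {F : profile V A -> {set A} | forall P, is_pair (F P)}.

Definition cr_fun (V A : finType) (F : consular_rule V A) := proj1_sig F.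

Definition best (A : finType) (o : linorder A) (W : {set A}) (x : A) : Prop :=
  x \in W /\ forall y, y \in W -> lo_rel o x y.

Definition worst (A : finType) (o : linorder A) (W : {set A}) (x : A) : Prop :=
  x \in W /\ forall y, y \in W -> lo_rel o y x.

Definition SPO (V A : finType) (F : consular_rule V A) : Prop :=
  forall (P : profile V A) (i : V) (o : linorder A) (a b : A),
    best (P i) (cr_fun F P) a ->
    best (P i) (cr_fun F (update P i o)) b ->
    lo_rel (P i) a b.

Definition SPP (V A : finType) (F : consular_rule V A) : Prop :=
  forall (P : profile V A) (i : V) (o : linorder A) (a b : A),
    worst (P i) (cr_fun F P) a ->
    worst (P i) (cr_fun F (update P i o)) b ->
    lo_rel (P i) a b.

Definition weakly_viable (V A : finType) (F : consular_rule V A) : Prop :=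
  forall a : A, exists P : profile V A, a \in cr_fun F P.

Definition unanimous (V A : finType) (F : consular_rule V A) : Prop :=
  forall (P : profile V A) (a : A),
    (forall i : V, forall y : A, lo_rel (P i) a y) -> a \in cr_fun F P.

(* Main.v *)
Require Import Defs.
From mathcomp Require Import all_boot.
From Stdlib Require Import FunctionalExtensionality.

Lemma best_exists (V A : finType) (F : consular_rule V A) (o : linorder A) P :
  exists b, best o (cr_fun F P) b.
Proof.
case: F => f Hf /=; have := Hf P; rewrite /is_pair => /cards2P [x [y [_ ->]]].
case: o => r [Hre Han Htr Hto] /=.
case/orP: (Hto x y) => Hxy.
- exists x; split; first by rewrite !inE eqxx.
  by move=> z; rewrite !inE => /orP [] /eqP ->; rewrite /lo_rel /=.
- exists y; split; first by rewrite !inE eqxx orbT.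
  by move=> z; rewrite !inE => /orP [] /eqP ->; rewrite /lo_rel /=.
Qed.

Lemma step (V A : finType) (F : consular_rule V A) (R : profile V A) i o a :
  SPO F -> (forall y, lo_rel o a y) -> a \in cr_fun F R ->
  a \in cr_fun F (update R i o).
Proof.
move=> Hspo Ha HaR.
have [b [HbW Hb]] := @best_exists V A F o (update R i o).
have E : update (update R i o) i (R i) = R.
  by apply: functional_extensionality => j; rewrite /update; case: eqP => // ->.
have Hoi : update R i o i = o by rewrite /update eqxx.
have := Hspo (update R i o) i (R i) b a.
rewrite E Hoi => H.
have Hba : lo_rel o b a by apply: H => //; split.
have Hab : lo_rel o a b by apply: Ha.
have : a = b.
  case: o Ha Hba Hab {Hb H Hoi E HbW} => r [Hre Han Htr Hto] /= _ Hba Hab.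
  by apply: Han; rewrite /lo_rel /= in Hba Hab *; rewrite Hab Hba.
by move=> ->.
Qed.

Theorem corollary11 (V A : finType) (v0 : V) (F : consular_rule V A) :
  weakly_viable F -> SPP F -> SPO F -> unanimous F.
Proof.
move=> Hwv _ Hspo P a Ha.
have [Q HQ] := Hwv a.
have key : forall s : seq V,
    a \in cr_fun F (fun j => if j \in s then P j else Q j).
  elim=> [|x s IH]; first by [].
  have E : (fun j => if j \in x :: s then P j else Q j) =
           update (fun j => if j \in s then P j else Q j) x (P x).
    apply: functional_extensionality => j; rewrite /update inE.
    by case: eqP => [->|].
  by rewrite E; apply: step => //.
have E : (fun j => if j \in enum V then P j else Q j) = P.
  by apply: functional_extensionality => j; rewrite mem_enum.
by have := key (enum V); rewrite E.
Qed.
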